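(* There are infinitely many golden ellipses in the unit disc $\mathbb{D}$ which are Blaschke $3$-ellipses.
   Context: The golden ratio is $\alpha=\frac{1+\sqrt5}{2}$. A golden ellipse is an ellipse for which the ratio of the length of the major axis to the length of the minor axis equals $\alpha$. For a Blaschke product of degree three of the form $B(z)=z\frac{(z-a_1)(z-a_2)}{(1-\overline{a_1}z)(1-\overline{a_2}z)}$ with $|a_1|,|a_2|<1$ and distinct zeros $0,a_1,a_2$, the associated Blaschke $3$-ellipse is the ellipse $E=\{z: |z-a_1|+|z-a_2|=|1-\overline{a_1}a_2|\}$ (with foci $a_1,a_2$); a Blaschke ellipse means an ellipse arising this way from some such $B$. *)

(* Defs.v *)
From Stdlib Require Import Reals List.
From Coquelicot Require Import Coquelicot.
Open Scope R_scope.

Definition golden_ratio : R := (1 + sqrt 5) / 2.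

Definition in_unit_disc (z : C) : Prop := Cmod z < 1.

Definition is_ellipse_axes (S : C -> Prop) (a b : R) : Prop :=
  0 < b /\ b <= a /\
  exists (c : C) (th : R),
    forall z : C, S z <->
      exists t : R, z = Cplus c (Cmult (cos th, sin th) (a * cos t, b * sin t)).

Definition golden_ellipse (S : C -> Prop) : Prop :=
  exists a b : R, is_ellipse_axes S a b /\ (2 * a) / (2 * b) = golden_ratio.

(** Blaschke 3-ellipse of B(z) = z (z-a1)(z-a2)/((1- conj a1 z)(1 - conj a2 z)),
    with |a1|,|a2| < 1 and 0, a1, a2 distinct. *)
Definition blaschke_3_ellipse (a1 a2 : C) : C -> Prop :=
  fun z => Cmod (Cminus z a1) + Cmod (Cminus z a2)
           = Cmod (Cminus 1 (Cmult (Cconj a1) a2)).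

Definition is_blaschke_ellipse (S : C -> Prop) : Prop :=
  exists a1 a2 : C,
    in_unit_disc a1 /\ in_unit_disc a2 /\
    a1 <> 0 /\ a2 <> 0 /\ a1 <> a2 /\
    S = blaschke_3_ellipse a1 a2.

Definition infinite_family (P : (C -> Prop) -> Prop) : Prop :=
  ~ exists l : list (C -> Prop), forall S, P S -> In S l.

(* Main.v *)
Require Import Defs.
From Stdlib Require Import Reals List Lra Psatz.
From Coquelicot Require Import Coquelicot.
Open Scope R_scope.

Lemma unit_circle_param (a b : R) : a^2 + b^2 = 1 -> exists t, cos t = a /\ sin t = b.
Proof.
  intro H.
  assert (Ha : -1 <= a <= 1) by nra.
  assert (Hs : sqrt (1 - a²) = Rabs b).
  { rewrite <- sqrt_Rsqr_abs. f_equal. unfold Rsqr. nra. }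
  destruct (Rle_dec 0 b) as [Hb|Hb].
  - exists (acos a). split. now apply cos_acos. rewrite sin_acos by auto. rewrite Hs. now apply Rabs_pos_eq.
  - exists (- acos a). split. rewrite cos_neg. now apply cos_acos.
    rewrite sin_neg, sin_acos by auto. rewrite Hs. rewrite Rabs_left by lra. ring.
Qed.

Lemma sqrt_sq_pos (x : R) : 0 <= x -> sqrt (x^2) = x.
Proof. intro H. rewrite <- Rsqr_pow2. now apply sqrt_Rsqr. Qed.

Lemma main_param (c A B co si x y : R) :
  0 < c -> c < A -> 0 < B -> B^2 = A^2 - c^2 -> co^2 + si^2 = 1 ->
  (sqrt ((x - c*co)^2 + (y - c*si)^2) + sqrt ((x + c*co)^2 + (y + c*si)^2) = 2*A
   <-> exists t, x = co * (A * cos t) - si * (B * sin t) /\ y = co * (B * sin t) + si * (A * cos t)).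
Proof.
  intros Hc HA HB HB2 Hu. split.
  - intro H.
    set (X := x*co + y*si). set (Y := - x*si + y*co).
    assert (Hx : x = co*X - si*Y) by (unfold X, Y; transitivity (x*(co^2+si^2)); [rewrite Hu|]; ring).
    assert (Hy : y = si*X + co*Y) by (unfold X, Y; transitivity (y*(co^2+si^2)); [rewrite Hu|]; ring).
    assert (E1 : (x - c*co)^2 + (y - c*si)^2 = (X-c)^2 + Y^2).
    { unfold X, Y. match goal with |- ?L = ?R => replace L with (R + (x^2+y^2-c^2)*(1-(co^2+si^2))) by ring end. rewrite Hu; ring. }
    assert (E2 : (x + c*co)^2 + (y + c*si)^2 = (X+c)^2 + Y^2).
    { unfold X, Y. match goal with |- ?L = ?R => replace L with (R + (x^2+y^2-c^2)*(1-(co^2+si^2))) by ring end. rewrite Hu; ring. }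
    rewrite E1, E2 in H. clearbody X Y.
    set (r1 := sqrt ((X-c)^2 + Y^2)) in H. set (r2 := sqrt ((X+c)^2 + Y^2)) in H.
    assert (R1 : r1^2 = (X-c)^2 + Y^2) by (unfold r1; rewrite <- Rsqr_pow2; apply Rsqr_sqrt; apply Rplus_le_le_0_compat; apply pow2_ge_0).
    assert (P1 : 0 <= r1) by apply sqrt_pos.
    assert (P2 : 0 <= r2) by apply sqrt_pos.
    assert (R2 : r2^2 = (X+c)^2 + Y^2) by (unfold r2; rewrite <- Rsqr_pow2; apply Rsqr_sqrt; apply Rplus_le_le_0_compat; apply pow2_ge_0). clearbody r1 r2.
    assert (D0 : (r2-r1)*(2*A) = 4*c*X).
    { rewrite <- H. replace ((r2-r1)*(r1+r2)) with (r2^2 - r1^2) by ring. rewrite R1, R2. ring. }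
    assert (D : r2 - r1 = 2*c*X/A).
    { apply (Rmult_eq_reg_r (2*A)); [rewrite D0; field; lra | lra]. }
    assert (Hr1 : r1 = A - c*X/A).
    { replace r1 with (((r1+r2)-(r2-r1))/2) by field. rewrite H, D. field. lra. }
    assert (HY : Y^2 = (A - c*X/A)^2 - (X-c)^2) by (rewrite <- Hr1; lra).
    assert (HY2 : Y^2 = B^2 - X^2*B^2/A^2) by (rewrite HY, HB2; field; lra).
    assert (Ell : (X/A)^2 + (Y/B)^2 = 1).
    { replace ((X/A)^2 + (Y/B)^2) with (X^2/A^2 + Y^2/B^2) by (field; lra). rewrite HY2. field. split; lra. }
    destruct (unit_circle_param _ _ Ell) as [t [Ct St]].
    exists t. rewrite Ct, St. split; [rewrite Hx | rewrite Hy]; field; lra.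
  - intros [t [Hx Hy]].
    assert (Hcs := sin2_cos2 t). unfold Rsqr in Hcs.
    assert (Cb : -1 <= cos t <= 1) by apply COS_bound.
    assert (HS : sin t ^ 2 = 1 - cos t ^ 2) by (rewrite <- Hcs; ring).
    assert (E1 : (x - c*co)^2 + (y - c*si)^2 = (A - c * cos t)^2).
    { rewrite Hx, Hy.
      transitivity ((co^2+si^2)*(A^2*cos t^2+B^2*sin t^2) - 2*c*(co^2+si^2)*A*cos t + c^2*(co^2+si^2)). ring.
      rewrite Hu, HB2, HS. ring. }
    assert (E2 : (x + c*co)^2 + (y + c*si)^2 = (A + c * cos t)^2).
    { rewrite Hx, Hy.
      transitivity ((co^2+si^2)*(A^2*cos t^2+B^2*sin t^2) + 2*c*(co^2+si^2)*A*cos t + c^2*(co^2+si^2)). ring.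
      rewrite Hu, HB2, HS. ring. }
    rewrite E1, E2, !sqrt_sq_pos. ring.
    all: destruct Cb; assert (c * cos t <= c) by (rewrite <- (Rmult_1_r c) at 2; apply Rmult_le_compat_l; lra); assert (-c <= c * cos t) by (replace (-c) with (c * -1) by ring; apply Rmult_le_compat_l; lra); lra.
Qed.

Definition s5 : R := sqrt 5.
Definition kk : R := s5 - 2.
Definition cc : R := sqrt kk.
Definition AA : R := (s5 - 1) / 2.
Definition BB : R := (3 - s5) / 2.

Lemma s5_facts : s5 * s5 = 5 /\ 2 < s5 < 3.
Proof.
  assert (H : s5 * s5 = 5) by (unfold s5; apply sqrt_sqrt; lra).
  assert (P : 0 <= s5) by (unfold s5; apply sqrt_pos).
  split; [exact H|]. split; nra.
Qed.

Lemma consts : 0 < cc /\ cc^2 = kk /\ cc < AA /\ 0 < BB /\ BB^2 = AA^2 - cc^2 /\ AA < 1 /\ BB <= AA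
  /\ (2*AA)/(2*BB) = golden_ratio /\ 1 - (- kk) = 2 * AA.
Proof.
  destruct s5_facts as [H5 [L U]].
  assert (Hk : 0 < kk) by (unfold kk; lra).
  assert (Hc2 : cc^2 = kk) by (unfold cc; rewrite <- Rsqr_pow2; apply Rsqr_sqrt; lra).
  assert (Hc : 0 < cc) by (unfold cc; apply sqrt_lt_R0; lra).
  unfold AA, BB, golden_ratio. fold s5.
  split; [lra|]. split; [exact Hc2|].
  split. { apply Rsqr_incrst_0; [|lra|lra]. rewrite !Rsqr_pow2, Hc2. unfold kk. nra. }
  split; [lra|]. split. { rewrite Hc2. unfold kk. nra. }
  split; [lra|]. split; [lra|]. split.
  { assert (3 - s5 <> 0) by lra. field_simplify_eq; auto. nra. }
  unfold kk. lra.
Qed.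

Definition Fam (th : R) : C -> Prop :=
  blaschke_3_ellipse (cc * cos th, cc * sin th) (- (cc * cos th), - (cc * sin th)).

Lemma fam_iff th z : Fam th z <->
  exists t, z = Cplus 0 (Cmult (cos th, sin th) (AA * cos t, BB * sin t)).
Proof.
  destruct consts as (Hc & Hc2 & HA & HB & HB2 & _ & _ & _ & Hk).
  assert (Hu : cos th ^ 2 + sin th ^ 2 = 1) by (rewrite <- (sin2_cos2 th); unfold Rsqr; ring).
  destruct z as [x y]. unfold Fam, blaschke_3_ellipse.
  assert (M : Cmod (Cminus 1 (Cmult (Cconj (cc * cos th, cc * sin th)) (- (cc * cos th), - (cc * sin th)))) = 2 * AA).
  { unfold Cmod, Cminus, Cplus, Copp, Cmult, Cconj; simpl.
    rewrite <- sqrt_sq_pos with (x := 2*AA) by lra. f_equal.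
    rewrite <- Hk, <- Hc2. transitivity ((1 + cc^2*(cos th^2+sin th^2))^2). ring. rewrite Hu. ring. }
  rewrite M.
  assert (E1 : Cmod (Cminus (x, y) (cc * cos th, cc * sin th)) = sqrt ((x - cc*cos th)^2 + (y - cc*sin th)^2)).
  { unfold Cmod, Cminus, Cplus, Copp; simpl. f_equal; try ring. }
  assert (E2 : Cmod (Cminus (x, y) (- (cc * cos th), - (cc * sin th))) = sqrt ((x + cc*cos th)^2 + (y + cc*sin th)^2)).
  { unfold Cmod, Cminus, Cplus, Copp; simpl. f_equal; try ring. }
  rewrite E1, E2, (main_param cc AA BB (cos th) (sin th) x y Hc HA HB HB2 Hu).
  split; intros [t Ht]; exists t.
  - destruct Ht as [-> ->]. unfold Cplus, Cmult; simpl. f_equal; ring.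
  - unfold Cplus, Cmult in Ht; simpl in Ht. injection Ht as -> ->. split; ring.
Qed.

Lemma fam_in_disc th z : Fam th z -> in_unit_disc z.
Proof.
  destruct consts as (Hc & Hc2 & HA & HB & HB2 & HA1 & HBA & _ & _).
  intro H. apply fam_iff in H. destruct H as [t ->].
  assert (Hu : cos th ^ 2 + sin th ^ 2 = 1) by (rewrite <- (sin2_cos2 th); unfold Rsqr; ring).
  assert (Ht : cos t ^ 2 + sin t ^ 2 = 1) by (rewrite <- (sin2_cos2 t); unfold Rsqr; ring).
  unfold in_unit_disc, Cmod, Cplus, Cmult, RtoC; cbn [fst snd].
  apply Rlt_le_trans with (sqrt 1); [|rewrite sqrt_1; lra]. apply sqrt_lt_1_alt. split.
  - apply Rplus_le_le_0_compat; apply pow2_ge_0.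
  - apply Rle_lt_trans with (AA^2 * cos t^2 + BB^2 * sin t^2).
    + right. transitivity ((cos th^2+sin th^2)*(AA^2 * cos t^2 + BB^2 * sin t^2)). ring. rewrite Hu. ring.
    + assert (BB^2 <= AA^2) by nra. assert (0 <= sin t^2) by apply pow2_ge_0.
      assert (BB^2 * sin t^2 <= AA^2 * sin t ^2) by (apply Rmult_le_compat_r; lra).
      assert (AA^2 < 1) by nra. nra.
Qed.

Lemma fam_inj th th' : 0 < th < 1 -> 0 < th' < 1 -> Fam th = Fam th' -> th = th'.
Proof.
  destruct consts as (Hc & Hc2 & HA & HB & HB2 & HA1 & HBA & _ & _).
  intros H1 H2 Heq.
  assert (P : Fam th' (AA * cos th', AA * sin th')).
  { apply fam_iff. exists 0. rewrite cos_0, sin_0. unfold Cplus, Cmult, RtoC; cbn [fst snd].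
    f_equal; ring. }
  rewrite <- Heq in P. apply fam_iff in P. destruct P as [t Pt].
  unfold Cplus, Cmult, RtoC in Pt; cbn [fst snd] in Pt. injection Pt as X Y.
  assert (Hu : cos th ^ 2 + sin th ^ 2 = 1) by (rewrite <- (sin2_cos2 th); unfold Rsqr; ring).
  assert (Hu' : cos th' ^ 2 + sin th' ^ 2 = 1) by (rewrite <- (sin2_cos2 th'); unfold Rsqr; ring).
  assert (Ht : cos t ^ 2 + sin t ^ 2 = 1) by (rewrite <- (sin2_cos2 t); unfold Rsqr; ring).
  assert (Sq : AA^2 = AA^2 * cos t^2 + BB^2 * sin t^2).
  { transitivity ((AA * cos th')^2 + (AA * sin th')^2).
    - transitivity (AA^2 * (cos th' ^ 2 + sin th' ^ 2)). rewrite Hu'. ring. ring.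
    - rewrite X, Y. transitivity ((cos th^2+sin th^2)*(AA^2 * cos t^2 + BB^2 * sin t^2)). ring. rewrite Hu. ring. }
  assert (S0 : (AA^2 - BB^2) * sin t ^ 2 = 0).
  { transitivity (AA^2 * (cos t^2 + sin t^2) - (AA^2 * cos t^2 + BB^2 * sin t^2)). ring.
    rewrite Ht, <- Sq. ring. }
  assert (AB : AA^2 - BB^2 <> 0) by (rewrite HB2; nra).
  apply Rmult_integral in S0. destruct S0 as [S0|S0]; [contradiction|].
  assert (St : sin t = 0) by (destruct (Req_dec (sin t) 0) as [E|E]; [exact E|apply (pow_nonzero _ 2) in E; contradiction]).
  rewrite St in X, Ht. rewrite pow_i in Ht by lia.
  assert (Hpi := PI2_1).
  assert (C1 : 0 < cos th) by (apply cos_gt_0; lra).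
  assert (C2 : 0 < cos th') by (apply cos_gt_0; lra).
  assert (X' : cos th' = cos th * cos t).
  { apply (Rmult_eq_reg_l AA); [|lra]. rewrite X. ring. }
  assert (Ct : cos t = 1 \/ cos t = -1) by nra.
  destruct Ct as [Ct|Ct]; rewrite Ct in X'.
  - apply cos_inj; lra.
  - nra.
Qed.

Definition famn (n : nat) : C -> Prop := Fam (/ (INR n + 2)).

Lemma famn_inj n m : famn n = famn m -> n = m.
Proof.
  intro H. unfold famn in H.
  assert (Pn := pos_INR n). assert (Pm := pos_INR m).
  apply fam_inj in H.
  - apply INR_eq. assert (INR n + 2 = INR m + 2).
    { rewrite <- (Rinv_inv (INR n + 2)), <- (Rinv_inv (INR m + 2)), H. reflexivity. }
    lra.
  - split. apply Rinv_0_lt_compat; lra. rewrite <- Rinv_1. apply Rinv_lt_contravar; lra.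
  - split. apply Rinv_0_lt_compat; lra. rewrite <- Rinv_1. apply Rinv_lt_contravar; lra.
Qed.

Lemma famn_prop n : golden_ellipse (famn n) /\ (forall z, famn n z -> in_unit_disc z) /\
    is_blaschke_ellipse (famn n).
Proof.
  destruct consts as (Hc & Hc2 & HA & HB & HB2 & HA1 & HBA & Hg & _).
  unfold famn. set (th := / (INR n + 2)).
  split; [|split].
  - exists AA, BB. split; [|exact Hg].
    split; [lra|]. split; [lra|]. exists 0, th. intro z. apply fam_iff.
  - apply fam_in_disc.
  - exists (cc * cos th, cc * sin th), (- (cc * cos th), - (cc * sin th)).
    assert (Hu : cos th ^ 2 + sin th ^ 2 = 1) by (rewrite <- (sin2_cos2 th); unfold Rsqr; ring).
    assert (M : Cmod (cc * cos th, cc * sin th) = cc).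
    { unfold Cmod; cbn [fst snd]. transitivity (sqrt (cc^2)); [|apply sqrt_sq_pos; lra]. f_equal.
      transitivity (cc^2 * (cos th ^ 2 + sin th ^ 2)). ring. rewrite Hu. ring. }
    assert (M' : Cmod (- (cc * cos th), - (cc * sin th)) = cc).
    { unfold Cmod; cbn [fst snd]. transitivity (sqrt (cc^2)); [|apply sqrt_sq_pos; lra]. f_equal.
      transitivity (cc^2 * (cos th ^ 2 + sin th ^ 2)). ring. rewrite Hu. ring. }
    unfold in_unit_disc. rewrite M, M'.
    split; [lra|]. split; [lra|].
    split; [intro E; rewrite E, Cmod_0 in M; lra|].
    split; [intro E; rewrite E, Cmod_0 in M'; lra|].
    split; [|reflexivity].
    intro E. injection E as E1 E2.
    assert (cos th = 0) by nra. assert (sin th = 0) by nra. nra.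
Qed.

Theorem theorem4 :
  infinite_family (fun S : C -> Prop =>
    golden_ellipse S /\
    (forall z, S z -> in_unit_disc z) /\
    is_blaschke_ellipse S).
Proof.
  intros [l Hl].
  set (s := map famn (seq 0 (S (length l)))).
  assert (ND : NoDup s).
  { apply NoDup_map_NoDup_ForallPairs. intros a b _ _. apply famn_inj. apply seq_NoDup. }
  assert (I : incl s l).
  { intros S HS. unfold s in HS. apply in_map_iff in HS. destruct HS as [n [<- _]].
    apply Hl. apply famn_prop. }
  assert (Le := NoDup_incl_length ND I). unfold s in Le.
  rewrite length_map, length_seq in Le. lia.
Qed.
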